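(* There exists a context-free language $L$ such that $L \leftarrow L$ is not context-free.
   Context: Outfix-guided insertion: $x \leftarrow y = \{ x_1 u z v x_2 \mid x = x_1 u v x_2,\ y = u z v,\ u \neq \varepsilon,\ v \neq \varepsilon \}$; for languages, $L_1 \leftarrow L_2 = \bigcup_{x \in L_1, y \in L_2} x \leftarrow y$. *)

(* Defs.v *)
From mathcomp Require Import all_boot.
From Stdlib Require Import Relations.
Set Implicit Arguments. Unset Strict Implicit. Unset Printing Implicit Defensive.

Definition language (T : Type) := seq T -> Prop.

Record cfg (T : finType) := CFG {
  nonterm : finType;
  start : nonterm;
  rules : seq (nonterm * seq (nonterm + T))
}.

Definition cfg_step (T : finType) (G : cfg T)
    (s1 s2 : seq (nonterm G + T)) : Prop :=
  exists (a b : seq (nonterm G + T)) (A : nonterm G) (rhs : seq (nonterm G + T)),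
    (A, rhs) \in rules G /\ s1 = a ++ inl A :: b /\ s2 = a ++ rhs ++ b.

Definition cfg_derives (T : finType) (G : cfg T) : relation (seq (nonterm G + T)) :=
  clos_refl_trans _ (@cfg_step T G).

Arguments cfg_derives {T} G.

Definition cfg_lang (T : finType) (G : cfg T) : language T :=
  fun w => cfg_derives G [:: inl (start G)] (map inr w).

Definition context_free (T : finType) (L : language T) : Prop :=
  exists G : cfg T, forall w, L w <-> cfg_lang G w.

(* Outfix-guided insertion of words:
   x <- y = { x1 u z v x2 | x = x1 u v x2, y = u z v, u <> eps, v <> eps }. *)
Definition ogi_word (T : Type) (x y : seq T) : language T :=
  fun w => exists x1 u z v x2 : seq T,
    [/\ x = x1 ++ u ++ v ++ x2, y = u ++ z ++ v, u <> [::], v <> [::]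
      & w = x1 ++ u ++ z ++ v ++ x2].

Definition ogi (T : Type) (L1 L2 : language T) : language T :=
  fun w => exists x y, [/\ L1 x, L2 y & ogi_word x y w].

(* Main.v *)
Require Import Defs.
From mathcomp Require Import all_boot.
From Stdlib Require Import Relations Lia.
From mathcomp Require Import zify.
Set Implicit Arguments. Unset Strict Implicit. Unset Printing Implicit Defensive.

Inductive gens (T : finType) (G : cfg T) : seq (nonterm G + T) -> seq T -> nat -> Prop :=
| gs_nil : gens [::] [::] 0
| gs_t t s w n : gens s w n -> gens (inr t :: s) (t :: w) n
| gs_n A rhs s w1 w2 n1 n2 : (A, rhs) \in rules G -> gens rhs w1 n1 -> gens s w2 n2 ->
    gens (inl A :: s) (w1 ++ w2) (n1 + n2).+1.
Arguments gens {T} G _ _ _.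

Lemma gens_eq T (G : cfg T) s w n w' n' : gens G s w n -> w = w' -> n = n' -> gens G s w' n'.
Proof. by move=> H <- <-. Qed.

Lemma gens_nilE T (G : cfg T) w n : gens G [::] w n -> w = [::] /\ n = 0.
Proof. by move=> H; inversion H. Qed.

Lemma gens_consT T (G : cfg T) t s w n : gens G (inr t :: s) w n ->
  exists w', w = t :: w' /\ gens G s w' n.
Proof. by move=> H; inversion H; subst; eauto. Qed.

Lemma gens_consN T (G : cfg T) A s w n : gens G (inl A :: s) w n ->
  exists rhs w1 w2 n1 n2, [/\ (A,rhs) \in rules G, gens G rhs w1 n1, gens G s w2 n2,
     w = w1 ++ w2 & n = (n1+n2).+1].
Proof. by move=> H; inversion H; subst; do 5 eexists; split; eauto. Qed.

Lemma gens_cat T (G : cfg T) s1 w1 n1 s2 w2 n2 :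
  gens G s1 w1 n1 -> gens G s2 w2 n2 -> gens G (s1 ++ s2) (w1 ++ w2) (n1 + n2).
Proof.
elim=> [|t s w n _ IH|A rhs s w1' w2' m1 m2 Hr H1 _ _ IH] H2 //=.
- by apply: gs_t; apply: IH.
- have K := gs_n Hr H1 (IH H2). apply: (gens_eq K); [by rewrite catA | lia].
Qed.

Lemma gens_split T (G : cfg T) s1 s2 w n : gens G (s1 ++ s2) w n ->
  exists w1 w2 n1 n2, [/\ w = w1 ++ w2, n = n1 + n2, gens G s1 w1 n1 & gens G s2 w2 n2].
Proof.
elim: s1 w n => [|x s1 IH] w n /= H.
- by exists [::], w, 0, n; split => //; apply: gs_nil.
- case: x H => [A|t] H.
  + have [rhs [w1 [w2 [n1 [n2 [Hr H1 H2 -> ->]]]]]] := gens_consN H.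
    have [v1 [v2 [m1 [m2 [-> -> K1 K2]]]]] := IH _ _ H2.
    exists (w1 ++ v1), v2, (n1 + m1).+1, m2; split; [by rewrite catA | lia | | by []].
    by apply: gs_n Hr H1 K1.
  + have [w' [-> H2]] := gens_consT H.
    have [v1 [v2 [m1 [m2 [-> -> K1 K2]]]]] := IH _ _ H2.
    by exists (t :: v1), v2, m1, m2; split => //; apply: gs_t.
Qed.

Lemma derives_ctx T (G : cfg T) a b s1 s2 : cfg_derives G s1 s2 ->
  cfg_derives G (a ++ s1 ++ b) (a ++ s2 ++ b).
Proof.
elim=> [x y [a' [b' [A [rhs [Hr [-> ->]]]]]]| x | x y z _ IH1 _ IH2].
- apply: rt_step; exists (a ++ a'), (b' ++ b), A, rhs; split => //; split; by rewrite -!catA.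
- exact: rt_refl.
- exact: rt_trans IH1 IH2.
Qed.

Lemma gens_derives T (G : cfg T) s w n : gens G s w n -> cfg_derives G s (map inr w).
Proof.
elim=> [|t s' w' n' _ IH|A rhs s' w1 w2 n1 n2 Hr _ IH1 _ IH2].
- exact: rt_refl.
- by have := derives_ctx [:: inr t] [::] IH; rewrite /= !cats0.
- apply: (@rt_trans _ _ _ (rhs ++ s')).
  + by apply: rt_step; exists [::], s', A, rhs.
  + have := derives_ctx [::] s' IH1; rewrite /= => H1.
    apply: rt_trans H1 _.
    have := derives_ctx (map inr w1) [::] IH2; rewrite !cats0 map_cat; exact.
Qed.

Lemma map_gens T (G : cfg T) w : gens G (map inr w) w 0.
Proof. by elim: w => [|t w IH] /=; [apply: gs_nil | apply: gs_t]. Qed.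

Lemma derives_gens T (G : cfg T) s w : cfg_derives G s (map inr w) -> exists n, gens G s w n.
Proof.
move=> /clos_rt_rt1n_iff H.
have: forall t, clos_refl_trans_1n _ (@cfg_step T G) s t -> forall w, t = map inr w -> exists n, gens G s w n.
  move=> t; elim=> [x | x y z [a [b [A [rhs [Hr [-> ->]]]]]] _ IH] w0 Ew.
  - by subst; exists 0; apply: map_gens.
  - have [n H0] := IH _ Ew.
    have [w1 [w23 [n1 [n23 [-> _ H1 H23]]]]] := gens_split H0.
    have [w2 [w3 [n2 [n3 [-> _ H2 H3]]]]] := gens_split H23.
    exists (n1 + (n2 + n3).+1); apply: gens_cat H1 _.
    exact: gs_n Hr H2 H3.
by move=> K; apply: K H _ _.
Qed.

Inductive ctx (T : finType) (G : cfg T) (C : nonterm G) : nonterm G -> seq T -> seq T -> nat -> Prop :=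
| cx_here : @ctx T G C C [::] [::] 0
| cx_step B rhs s1 s2 D l1 r1 l r n1 n2 m : (B, rhs) \in rules G -> rhs = s1 ++ inl D :: s2 ->
    gens G s1 l1 n1 -> gens G s2 r1 n2 -> @ctx T G C D l r m -> @ctx T G C B (l1 ++ l) (r ++ r1) (n1 + n2 + m).+1.
Arguments ctx {T} G C _ _ _ _.

Lemma ctx_plug T (G : cfg T) C B l r m x k : ctx G C B l r m -> gens G [:: inl C] x k ->
  gens G [:: inl B] (l ++ x ++ r) (m + k).
Proof.
move=> H Hx; elim: H => [|B' rhs s1 s2 D l1 r1 l' r' n1 n2 m' Hr Erhs H1 H2 _ IH].
- by rewrite /= cats0.
- have K := gens_cat H1 (gens_cat IH H2).
  rewrite Erhs in Hr; have K2 := gs_n Hr K (@gs_nil _ G).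
  apply: (gens_eq K2); [by rewrite cats0 !catA | lia].
Qed.

Definition bnd T (G : cfg T) := (sumn [seq size p.2 | p <- rules G]).+1.

Lemma rule_size T (G : cfg T) A rhs : (A, rhs) \in rules G -> size rhs < bnd G.
Proof.
rewrite /bnd ltnS; elim: (rules G) => //= p s IH.
rewrite inE => /orP [/eqP <- /= | /IH]; lia.
Qed.

Lemma bigchild T (G : cfg T) s w n M : gens G s w n -> 0 < M -> size s * M < size w ->
  exists s1 D s2 l x r na nd nc,
   [/\ s = s1 ++ inl D :: s2, w = l ++ x ++ r, n = na + nd + nc & M < size x] /\
   [/\ gens G s1 l na, gens G [:: inl D] x nd & gens G s2 r nc].
Proof.
move=> H HM; elim: H => [|t s' w' n' Hs IH|A rhs s' w1 w2 n1 n2 Hr H1 _ Hs IH] /=.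
- by rewrite mul0n.
- rewrite mulSn => Hlt.
  case: (ltnP (size s' * M) (size w')) => Hc; last lia.
  have [s1 [D [s2 [l [x [r [na [nd [nc [[-> -> -> HX] [Ha Hd Hc']]]]]]]]]]] := IH Hc.
  exists (inr t :: s1), D, s2, (t :: l), x, r, na, nd, nc; split => //; split => //.
  exact: gs_t.
- rewrite mulSn size_cat => Hlt.
  case: (ltnP M (size w1)) => HM1.
  + exists [::], A, s', [::], w1, w2, 0, (n1 + 0).+1, n2; split; [split; [by []|by []|lia|by []] |].
    split; [exact: gs_nil | | by []].
    by apply: (gens_eq (gs_n Hr H1 (@gs_nil _ G))); rewrite ?cats0.
  + have Hc : size s' * M < size w2 by lia.
    have [s1 [D [s2 [l [x [r [na [nd [nc [[-> -> -> HX] [Ha Hd Hc']]]]]]]]]]] := IH Hc.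
    exists (inl A :: s1), D, s2, (w1 ++ l), x, r, (n1 + na).+1, nd, nc; split; [split; [by []|by rewrite catA|lia|by []] |].
    split => //; exact: gs_n Hr H1 Ha.
Qed.

Lemma vis T (G : cfg T) k : forall (V : seq (nonterm G)) (A : nonterm G) w n, gens G [:: inl A] w n ->
  #|[pred C | C \notin V]| <= k -> bnd G ^ k < size w ->
  exists C l r x n1 n2, [/\ ctx G C A l r n1, gens G [:: inl C] x n2, w = l ++ x ++ r, n = n1 + n2 &
   (C \in V \/ exists l' r' x' m1 m2, [/\ ctx G C C l' r' m1, 0 < m1, gens G [:: inl C] x' m2,
       x = l' ++ x' ++ r' & n2 = m1 + m2])].
Proof.
elim: k => [|k IH] V A w n H Hc Hs; case AV: (A \in V).
- by exists A, [::], [::], w, 0, n; split => //; [apply: cx_here | rewrite cats0 | left].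
- have : 0 < #|[pred C | C \notin V]| by apply/card_gt0P; exists A; rewrite inE AV.
  lia.
- by exists A, [::], [::], w, 0, n; split => //; [apply: cx_here | rewrite cats0 | left].
- have [rhs [w1 [w2 [n1 [n2 [Hr H1 H2 Ew En]]]]]] := gens_consN H.
  have [E2 E2n] := gens_nilE H2; subst.
  have Hb := rule_size Hr.
  have Hpos : 0 < bnd G ^ k by rewrite expn_gt0.
  have Hs' : size rhs * bnd G ^ k < size w1.
    rewrite size_cat /= addn0 expnS in Hs.
    apply: leq_ltn_trans _ Hs; apply: leq_mul (ltnW Hb) (leqnn _).
  have [s1 [D [s2 [l [x [r [na [nd [nc [[Es Ew1 En1 Hx] [Ha Hd Hc']]]]]]]]]]] := bigchild H1 Hpos Hs'.
  have Hc2 : #|[pred C | C \notin A :: V]| <= k.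
    move: Hc; rewrite (cardD1 A) inE AV /=.
    rewrite (@eq_card _ _ [pred C | C \notin A :: V]) //.
    by move=> y; rewrite !inE negb_or.
  have [C [lc [rc [xc [m1 [m2 [Hctx Hgx Ex Em Hor]]]]]]] := IH (A :: V) D x nd Hd Hc2 Hx.
  have Hctx2 := cx_step Hr Es Ha Hc' Hctx.
  case: Hor => [|Hrep].
  + rewrite in_cons => /orP [/eqP EC | CV].
    * subst C.
      exists A, [::], [::], (w1 ++ [::]), 0, (n1 + 0).+1.
      split; [exact: cx_here|exact: H|by rewrite !cats0|lia|].
      right; exists (l ++ lc), (rc ++ r), xc, (na + nc + m1).+1, m2.
      split; [exact: Hctx2|by []|exact: Hgx| |lia].
      by rewrite cats0 Ew1 Ex -!catA.
    * exists C, (l ++ lc), (rc ++ r), xc, (na + nc + m1).+1, m2.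
      split; [exact: Hctx2|exact: Hgx| |lia|by left].
      by rewrite cats0 Ew1 Ex -!catA.
  + exists C, (l ++ lc), (rc ++ r), xc, (na + nc + m1).+1, m2.
    split; [exact: Hctx2|exact: Hgx| |lia|by right].
    by rewrite cats0 Ew1 Ex -!catA.
Qed.

Lemma ctx_eq T (G : cfg T) C B l r m l' r' m' : ctx G C B l r m -> l = l' -> r = r' -> m = m' -> ctx G C B l' r' m'.
Proof. by move=> H <- <- <-. Qed.

Lemma pump T (G : cfg T) : forall n w, gens G [:: inl (start G)] w n ->
  bnd G ^ #|nonterm G| < size w ->
  exists u v x y z n', [/\ w = u ++ v ++ x ++ y ++ z, v ++ y != [::] &
     gens G [:: inl (start G)] (u ++ v ++ v ++ x ++ y ++ y ++ z) n'].
Proof.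
elim/ltn_ind => n IHn w H Hs.
have Hc : #|[pred C : nonterm G | C \notin [::]]| <= #|nonterm G| by apply: max_card.
have [C [l [r [x [n1 [n2 [Hctx Hgx Ew En []]]]]]]] := vis H Hc Hs; first by rewrite in_nil.
move=> [l' [r' [x' [m1 [m2 [HCC Hm1 Hx' Ex En2]]]]]].
case E: (l' ++ r' == [::]).
- move/eqP/nilP: E; rewrite cat_nilp => /andP [/nilP El /nilP Er].
  subst l' r'; rewrite /= cats0 in Ex; subst x.
  have K := ctx_plug Hctx Hx'.
  rewrite Ew in Hs *.
  apply: (IHn (n1 + m2)); [lia | exact: K | exact: Hs].
- exists l, l', x', r', r, (n1 + (m1 + n2)); split.
  + by rewrite Ew Ex -!catA.
  + by rewrite E.
  + have K := ctx_plug Hctx (ctx_plug HCC Hgx).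
    by apply: (gens_eq K); rewrite // Ex -!catA.
Qed.

Lemma lang_gens T (G : cfg T) w : cfg_lang G w <-> exists n, gens G [:: inl (start G)] w n.
Proof.
split; first exact: derives_gens.
by move=> [n H]; apply: gens_derives H.
Qed.

Definition la : 'I_6 := @Ordinal 6 0 isT.
Definition lb : 'I_6 := @Ordinal 6 1 isT.
Definition lc : 'I_6 := @Ordinal 6 2 isT.
Definition ld : 'I_6 := @Ordinal 6 3 isT.
Definition lh : 'I_6 := @Ordinal 6 4 isT.
Definition ls : 'I_6 := @Ordinal 6 5 isT.
Definition nS : 'I_3 := @Ordinal 3 0 isT.
Definition nP : 'I_3 := @Ordinal 3 1 isT.
Definition nQ : 'I_3 := @Ordinal 3 2 isT.

Definition rules0 : seq ('I_3 * seq ('I_3 + 'I_6)) :=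
 [:: (nS, [:: inl nP; inr ld; inr ls]);
     (nP, [:: inr la; inl nP; inr lb]);
     (nP, [:: inr lh]);
     (nS, [:: inr lh; inl nQ; inr ls]);
     (nQ, [:: inr lb; inl nQ; inr lc]);
     (nQ, [:: inr ld])].

Definition G0 : cfg 'I_6 := @CFG 'I_6 'I_3 nS rules0.
Definition L0 : language 'I_6 := cfg_lang G0.


Fixpoint semS (N T : Type) (Lg : N -> seq T -> Prop) (s : seq (N + T)) (w : seq T) : Prop :=
  match s with
  | [::] => w = [::]
  | inr t :: s' => exists w', w = t :: w' /\ semS Lg s' w'
  | inl A :: s' => exists w1 w2, [/\ w = w1 ++ w2, Lg A w1 & semS Lg s' w2]
  end.

Lemma gens_sound T (G : cfg T) (Lg : nonterm G -> seq T -> Prop) :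
  (forall A rhs w, (A, rhs) \in rules G -> semS Lg rhs w -> Lg A w) ->
  forall s w n, gens G s w n -> semS Lg s w.
Proof.
move=> HR s w n; elim=> [|t s' w' n' _ IH|A rhs s' w1 w2 n1 n2 Hr _ IH1 _ IH2] //=.
- by exists w'.
- by exists w1, w2; split => //; apply: HR Hr IH1.
Qed.

Definition LP (w : seq 'I_6) := exists k, w = nseq k la ++ lh :: nseq k lb.
Definition LQ (w : seq 'I_6) := exists k, w = nseq k lb ++ ld :: nseq k lc.
Definition LA k : seq 'I_6 := nseq k la ++ lh :: nseq k lb ++ [:: ld; ls].
Definition LB k : seq 'I_6 := lh :: nseq k lb ++ ld :: nseq k lc ++ [:: ls].
Definition LS (w : seq 'I_6) := (exists k, w = LA k) \/ (exists k, w = LB k).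
Definition Lg0 (A : 'I_3) : seq 'I_6 -> Prop :=
  match val A with 0 => LS | 1 => LP | _ => LQ end.

Lemma nseqSr (U : Type) n (x : U) : nseq n.+1 x = nseq n x ++ [:: x].
Proof. by elim: n => //= n ->. Qed.

Lemma rules0_sound A rhs w : (A, rhs) \in rules G0 -> semS Lg0 rhs w -> Lg0 A w.
Proof.
rewrite /= !inE.
case/orP => [/eqP [-> ->]|]; first by move=> /= [w1 [w2 [-> [k ->] [w' [-> [w'' [-> ->]]]]]]];
  left; exists k; rewrite /LA -catA.
case/orP => [/eqP [-> ->]|].
  move=> /= [w' [-> [w1 [w2 [-> [k ->] [w'' [-> ->]]]]]]].
  by exists k.+1; rewrite [nseq k.+1 lb]nseqSr /= -!catA.
case/orP => [/eqP [-> ->]|].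
  by move=> /= [w' [-> ->]]; exists 0.
case/orP => [/eqP [-> ->]|].
  move=> /= [w' [-> [w1 [w2 [-> [k ->] [w'' [-> ->]]]]]]].
  by right; exists k; rewrite /LB -!catA.
case/orP => [/eqP [-> ->]|].
  move=> /= [w' [-> [w1 [w2 [-> [k ->] [w'' [-> ->]]]]]]].
  by exists k.+1; rewrite [nseq k.+1 lc]nseqSr /= -!catA.
move=> /eqP [-> ->].
by move=> /= [w' [-> ->]]; exists 0.
Qed.

Lemma L0_sound w : L0 w -> LS w.
Proof.
move=> /lang_gens [n H].
have := gens_sound rules0_sound H.
by move=> /= [w1 [w2 [-> H1 ->]]]; rewrite cats0.
Qed.

Lemma genP k : exists n, gens G0 [:: inl nP] (nseq k la ++ lh :: nseq k lb) n.
Proof.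
elim: k => [|k [n IH]].
- by exists 1; apply: (gens_eq (gs_n (rhs := [:: inr lh]) _ (gs_t _ (@gs_nil _ G0)) (@gs_nil _ G0))).
- have K : gens G0 [:: inr la; inl nP; inr lb] (la :: (nseq k la ++ lh :: nseq k lb) ++ [:: lb]) (n + 0).
    by apply: gs_t; apply: (gens_cat IH); apply: gs_t; apply: gs_nil.
  exists ((n+0) + 0).+1; apply: (gens_eq (gs_n _ K (@gs_nil _ G0))) => //.
  by rewrite cats0 [nseq k.+1 lb]nseqSr /= -!catA.
Qed.

Lemma genQ k : exists n, gens G0 [:: inl nQ] (nseq k lb ++ ld :: nseq k lc) n.
Proof.
elim: k => [|k [n IH]].
- by exists 1; apply: (gens_eq (gs_n (rhs := [:: inr ld]) _ (gs_t _ (@gs_nil _ G0)) (@gs_nil _ G0))).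
- have K : gens G0 [:: inr lb; inl nQ; inr lc] (lb :: (nseq k lb ++ ld :: nseq k lc) ++ [:: lc]) (n + 0).
    by apply: gs_t; apply: (gens_cat IH); apply: gs_t; apply: gs_nil.
  exists ((n+0) + 0).+1; apply: (gens_eq (gs_n _ K (@gs_nil _ G0))) => //.
  by rewrite cats0 [nseq k.+1 lc]nseqSr /= -!catA.
Qed.

Lemma L0_A k : L0 (LA k).
Proof.
apply/lang_gens; have [n H] := genP k.
have K : gens G0 [:: inl nP; inr ld; inr ls] ((nseq k la ++ lh :: nseq k lb) ++ [:: ld; ls]) (n + 0).
  by apply: (gens_cat H); do 2 apply: gs_t; apply: gs_nil.
exists ((n + 0) + 0).+1; apply: (gens_eq (gs_n _ K (@gs_nil _ G0))) => //.
by rewrite cats0 /LA -catA.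
Qed.

Lemma L0_B k : L0 (LB k).
Proof.
apply/lang_gens; have [n H] := genQ k.
have K : gens G0 [:: inr lh; inl nQ; inr ls] (lh :: (nseq k lb ++ ld :: nseq k lc) ++ [:: ls]) (n + 0).
  by apply: gs_t; apply: (gens_cat H); apply: gs_t; apply: gs_nil.
exists ((n + 0) + 0).+1; apply: (gens_eq (gs_n _ K (@gs_nil _ G0))) => //.
by rewrite cats0 /LB /= -catA.
Qed.

Lemma sep (U : eqType) (m : U) s1 t1 s2 t2 : m \notin s2 -> m \notin t2 ->
  s1 ++ m :: t1 = s2 ++ m :: t2 -> s1 = s2 /\ t1 = t2.
Proof.
elim: s1 s2 => [|h s1 IH] [|h2 s2] /= H2 Ht2 E.
- by case: E.
- by case: E => Eh _; rewrite Eh inE eqxx in H2.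
- by case: E => _ Et; rewrite -Et mem_cat inE eqxx orbT in Ht2.
- case: E => -> /IH; rewrite inE negb_or in H2; case/andP: H2 => _ H2.
  by move=> /(_ H2 Ht2) [-> ->].
Qed.

Lemma fs0 (U : eqType) (m : U) s2 : forall s1 s q, s ++ q = s1 ++ m :: s2 -> m \notin s ->
  exists q', s1 = s ++ q'.
Proof.
move=> s1 s; elim: s s1 => [|h s IH] s1 q; first by exists s1.
case: s1 => [|h1 s1] /= E; case: E => Eh; first by rewrite Eh inE eqxx.
rewrite inE negb_or => E /andP [_ Hs]; have [q' ->] := IH _ _ E Hs.
by exists q'; rewrite Eh.
Qed.

Lemma fs (U : eqType) (m : U) s2 : forall p s1 s q, p ++ s ++ q = s1 ++ m :: s2 -> m \notin s ->
  (exists q', s1 = p ++ s ++ q') \/ (exists p', s2 = p' ++ s ++ q).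
Proof.
elim=> [|h p IH] s1 s q /=.
- by move=> E Hs; left; apply: fs0 E Hs.
- case: s1 => [|h1 s1] /= E Hs; case: E => Eh E.
  + by right; exists p.
  + case: (IH _ _ _ E Hs) => [[q' ->]|[p' ->]]; [left; exists q'; by rewrite Eh | right; by exists p'].
Qed.

Lemma nseq_fac (U : eqType) (x : U) k p s q : p ++ s ++ q = nseq k x -> all (pred1 x) s.
Proof. by move=> E; have := all_pred1_nseq x k; rewrite -E !all_cat => /and3P []. Qed.

Lemma mem_r (U : eqType) (t : U) x1 u z v x2 :
  t \in x1 ++ u ++ z ++ v ++ x2 -> (t \in x1 ++ u ++ v ++ x2) || (t \in u ++ z ++ v).
Proof.
rewrite !mem_cat; case: (t \in x1); case: (t \in u); case: (t \in z); case: (t \in v); by case: (t \in x2).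
Qed.

Lemma rcons_eq2 (U : Type) (s1 s2 : seq U) a b : rcons s1 a = rcons s2 b -> s1 = s2 /\ a = b.
Proof. by move/rcons_inj => [-> ->]. Qed.

Definition LC k : seq 'I_6 := nseq k la ++ lh :: nseq k lb ++ ld :: nseq k lc ++ [:: ls].

Lemma ogiF r : ogi L0 L0 r -> la \in r -> lc \in r -> exists k, r = LC k.
Proof.
move=> [x [y [Lx Ly [x1 [u [z [v [x2 [Ex Ey Hu Hv Er]]]]]]]]] Ha Hc.
have Mem t : t \in r -> (t \in x) || (t \in y) by rewrite Er Ex Ey; apply: mem_r.
case: (L0_sound Lx) => [[n Exn]|[n Exn]]; case: (L0_sound Ly) => [[m Eym]|[m Eym]].
- move: (Mem _ Hc); rewrite Exn Eym /LA !(inE, mem_cat, mem_nseq) /=.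
  by rewrite !andbF.
-
  case: u Hu Ex Ey Er => [//|t u'] _ Ex Ey Er.
  case/lastP: v Hv Ex Ey Er => [//|v' t2] _ Ex Ey Er.
  have Ey2 : rcons (t :: u' ++ z ++ v') t2 = rcons (lh :: nseq m lb ++ ld :: nseq m lc) ls.
    rewrite (_ : rcons (lh :: nseq m lb ++ ld :: nseq m lc) ls = y); first by rewrite Ey /= -!rcons_cat.
    by rewrite Eym /LB -cats1 /= -!catA.
  have [[Et Ey3] Et2] := rcons_eq2 Ey2; subst t t2.
  have Ex2 : (x1 ++ lh :: u' ++ v') ++ ls :: x2 = (nseq n la ++ lh :: nseq n lb ++ [:: ld]) ++ ls :: [::].
    rewrite (_ : _ ++ ls :: [::] = x); last by rewrite Exn /LA -!catA /= -!catA.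
    by rewrite Ex -cats1 -!catA /= -!catA.
  have [Ex3 E2] := sep (m := ls) (s1 := x1 ++ lh :: u' ++ v') (t1 := x2)
     (s2 := nseq n la ++ lh :: nseq n lb ++ [:: ld]) (t2 := [::])
     ltac:(by rewrite !(inE, mem_cat, mem_nseq) /= !andbF) ltac:(by []) Ex2.
  subst x2.
  have [Ex1 Ex4] := sep (m := lh) (s1 := x1) (t1 := u' ++ v') (s2 := nseq n la) (t2 := nseq n lb ++ [:: ld])
     ltac:(by rewrite !(inE, mem_cat, mem_nseq) /= !andbF) ltac:(by rewrite !(inE, mem_cat, mem_nseq) /= !andbF) Ex3.
  subst x1.
  have Enm : n = m.
    clear Ex Ey Ex2 Ex3 Er Ey2.
    case/lastP: v' Ex4 Ey3 => [|v'' t3] Ex4 Ey3.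
    + rewrite cats0 in Ex4; rewrite Ex4 cats0 -catA /= in Ey3.
      have [E _] := sep (m := ld) (s1 := nseq n lb) (t1 := z) (s2 := nseq m lb) (t2 := nseq m lc)
        ltac:(by rewrite !(inE, mem_cat, mem_nseq) /= !andbF) ltac:(by rewrite !(inE, mem_cat, mem_nseq) /= !andbF) Ey3.
      by have := congr1 size E; rewrite !size_nseq.
    + rewrite -rcons_cat cats1 in Ex4; have [Ex5 Et3] := rcons_eq2 Ex4; subst t3.
      rewrite -!rcons_cat in Ey3.
      case: m Eym Ey3 => [|m] Eym Ey3.
      * have Ey4 : rcons (u' ++ z ++ v'') ld = rcons [::] ld by [].
        move: (rcons_eq2 Ey4) => [/nilP]; rewrite !cat_nilp => /and3P [/nilP E1 _ /nilP E3] _.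
        by move: Ex5; rewrite E1 E3 => /(congr1 size); rewrite size_nseq.
      * have Ey4 : rcons (u' ++ z ++ v'') ld = rcons (nseq m.+1 lb ++ ld :: nseq m lc) lc.
          by rewrite Ey3 [nseq m.+1 lc]nseqSr -cats1 -catA.
        by move: (rcons_eq2 Ey4) => [_ /(congr1 val)].
  subst m; exists n.
  rewrite Er cats0 /LC.
  have -> : (lh :: u') ++ z ++ rcons v' ls = rcons (lh :: u' ++ z ++ v') ls by rewrite /= -!rcons_cat.
  by rewrite Ey3 -cats1 /= -!catA.
-
  case: m Eym => [|m] Eym.
  + move: (Mem _ Ha); rewrite Exn Eym /LA /LB !(inE, mem_cat, mem_nseq) /=.
    by rewrite !andbF.
  + case: u Hu Ex Ey Er => [//|t u'] _ Ex Ey Er.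
    move: Ey; rewrite Eym /LA /= => - [Et _]; subst t.
    have : la \in x by rewrite Ex !(inE, mem_cat) eqxx /= orbT.
    by rewrite Exn /LB !(inE, mem_cat, mem_nseq) /= !andbF.
- move: (Mem _ Ha); rewrite Exn Eym /LB !(inE, mem_cat, mem_nseq) /=.
  by rewrite !andbF.
Qed.

Lemma size6 (s : seq 'I_6) : size s = count_mem la s + count_mem lb s + count_mem lc s +
  count_mem ld s + count_mem lh s + count_mem ls s.
Proof.
elim: s => //= t s ->; case: t => [[|[|[|[|[|[|m]]]]]] Ht] //=; lia.
Qed.

Lemma cnt_LC t k : count_mem t (LC k) = (la == t) * k + (lb == t) * k + (lc == t) * k +
  (ld == t) + (lh == t) + (ls == t).
Proof. rewrite /LC !(count_cat, count_nseq) /= !(count_cat, count_nseq) /= !(count_cat, count_nseq) /=; lia. Qed.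

Lemma unif K p s q : p ++ s ++ q = LC K -> lh \notin s -> ld \notin s -> ls \notin s ->
  exists l, all (pred1 l) s.
Proof.
rewrite /LC => E Hh Hd Hs.
case: (fs E Hh) => [[q' E1]|[p' E1]]; first by exists la; apply: (nseq_fac (esym E1)).
case: (fs (esym E1) Hd) => [[q'' E2]|[p'' E2]]; first by exists lb; apply: (nseq_fac (esym E2)).
case: (fs (esym E2) Hs) => [[q3 E3]|[p3 E3]]; first by exists lc; apply: (nseq_fac (esym E3)).
exists la; move: E3; case: p3 => //; case: s {Hh Hd Hs E E1 E2} => //.
Qed.

Theorem theorem5p1 :
  exists (T : finType) (L : language T), context_free L /\ ~ context_free (ogi L L).
Proof.
exists _, L0; split; first by exists G0.
move=> [G' HG'].
set K := bnd G' ^ #|nonterm G'|.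
have HK : 0 < K by rewrite /K expn_gt0.
have Hw0 : ogi L0 L0 (LC K).
  exists (LA K), (LB K); split; [exact: L0_A | exact: L0_B |].
  exists (nseq K la), (lh :: nseq K lb ++ [:: ld]), (nseq K lc), [:: ls], [::]; split => //.
  + by rewrite /LA /= -!catA.
  + by rewrite /LB /= -!catA.
  + by rewrite /LC /= -!catA.
have [n Hn] := (lang_gens G' (LC K)).1 ((HG' _).1 Hw0).
have Hs : K < size (LC K) by rewrite /LC !size_cat /= !size_cat /= !size_nseq; lia.
have [u [v [x [y [z [n' [Ew Hvy Hg]]]]]]] := pump Hn Hs.
have Hw' : ogi L0 L0 (u ++ v ++ v ++ x ++ y ++ y ++ z).
  by apply/HG'/lang_gens; exists n'.
have Sub t : t \in LC K -> t \in u ++ v ++ v ++ x ++ y ++ y ++ z.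
  rewrite Ew !mem_cat; case: (t \in u); case: (t \in v); case: (t \in x); case: (t \in y);
  by case: (t \in z).
have [k Ek] := ogiF Hw' (Sub la ltac:(by rewrite /LC !(inE, mem_cat, mem_nseq) HK))
                         (Sub lc ltac:(by rewrite /LC !(inE, mem_cat, mem_nseq) HK)).
have C t : count_mem t (LC k) = count_mem t (LC K) + count_mem t (v ++ y).
  by rewrite -Ek Ew !count_cat; lia.
have Ca := C la; have Cb := C lb; have Cc := C lc; have Cd := C ld; have Ch := C lh; have Cs := C ls.
rewrite !cnt_LC /= in Ca Cb Cc Cd Ch Cs.
have Sz := size6 (v ++ y).
have Hpos : 0 < size (v ++ y) by rewrite lt0n size_eq0.
set s := v ++ y in Ca Cb Cc Cd Ch Cs Sz Hpos *.
set ca := count_mem la s in Ca Sz *. set cb := count_mem lb s in Cb Sz *.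
set cc := count_mem lc s in Cc Sz *. set cd := count_mem ld s in Cd Sz *.
set ch := count_mem lh s in Ch Sz *. set cs := count_mem ls s in Cs Sz *.
have Hpos' : 0 < ca + cb + cc + cd + ch + cs by rewrite -Sz.
have Ma : la \in s.
  have P : 0 < ca by lia.
  by apply/negPn/negP => /count_memPn E; move: P; rewrite /ca E.
have Mb : lb \in s.
  have P : 0 < cb by lia.
  by apply/negPn/negP => /count_memPn E; move: P; rewrite /cb E.
have Mc : lc \in s.
  have P : 0 < cc by lia.
  by apply/negPn/negP => /count_memPn E; move: P; rewrite /cc E.
have Nh : lh \notin s.
  have P : ch = 0 by lia.
  by apply/count_memPn; move: P; rewrite /ch.
have Nd : ld \notin s.
  have P : cd = 0 by lia.
  by apply/count_memPn; move: P; rewrite /cd.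
have Ns : ls \notin s.
  have P : cs = 0 by lia.
  by apply/count_memPn; move: P; rewrite /cs.
move: Nh Nd Ns; rewrite /s !mem_cat !negb_or => /andP [Nh1 Nh2] /andP [Nd1 Nd2] /andP [Ns1 Ns2].
have [l1 A1] : exists l, all (pred1 l) v.
  by apply: (@unif K u v (x ++ y ++ z)) => //; rewrite Ew.
have [l2 A2] : exists l, all (pred1 l) y.
  by apply: (@unif K (u ++ v ++ x) y z) => //; rewrite Ew -!catA.
have H t : t \in s -> (t == l1) || (t == l2).
  by rewrite /s mem_cat => /orP [/(allP A1) | /(allP A2)] /= ->; rewrite ?orbT.
case/orP: (H _ Ma) => /eqP E1; case/orP: (H _ Mb) => /eqP E2; case/orP: (H _ Mc) => /eqP E3;
  subst; try (by move/(congr1 val): E2); try (by move/(congr1 val): E3).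
Qed.
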